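(* For any Markov system $\mathbb{M}=(a,b,[a],[b],[b^{-1}])$, the gaps of $X_\infty$ (components of $S^1\setminus X_\infty$) form a single orbit under the action of $\mathbb{G}(\mathbb{M})$.
   Context: A Markov system is a tuple $(a,b,[a],[b],[b^{-1}])$ with $a$ an orientation-preserving involution of $S^1$, $b$ an orientation-preserving homeomorphism of $S^1$ of period three, and $[a],[b],[b^{-1}]\subset S^1$ such that: (A) they are pairwise disjoint, each a union of $k$ disjoint closed intervals ($k\in\mathbb{N}$); components are $a$-, $b$-, $b^{-1}$-intervals; $X=[a]\cup[b]\cup[b^{-1}]$; (B) no two $a$-intervals are consecutive among the components of $X$ in circular order; likewise for $b$- and for $b^{-1}$-intervals; with principal gaps (gaps of $X$ between an $a$-interval and a $b^{\pm1}$-interval), complementary gaps (between a $b$- and a $b^{-1}$-interval), $b$-blocks (maximal intervals made of $b^{\pm1}$-intervals and complementary gaps) and $[[b]]$ the union of $b$-blocks: (C) $a([a])=[[b]]$; (D) $b([a])=[b]$, $b([b])=[b^{-1}]$; (E) $a$ maps principal gaps to principal gaps and exactly one of $b^{\pm1}$ maps a given principal gap to a principal gap; the graph on principal gaps joining $J$ to $a(J)$ and to that image is connected. $\mathbb{G}(\mathbb{M})$ is the subgroup of $\mathrm{Homeo}_+(S^1)$ generated by $a$ and $b$, and $X_\infty=\bigcap_{f\in\mathbb{G}(\mathbb{M})}f^{-1}(X)$. *)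

(* Defs.v *)
(* The circle S^1 is modelled as R/Z: a subset of S^1 is represented by a
   1-periodic subset of R, and an orientation-preserving homeomorphism of S^1
   by a lift R -> R (continuous, strictly increasing, F(x+1) = F(x)+1). *)
From Stdlib Require Import Reals Relations.
Open Scope R_scope.

Definition set := R -> Prop.

Definition same_pt (x y : R) : Prop := exists n : Z, y = x + IZR n.

Definition homeo_lift (f : R -> R) : Prop :=
  continuity f /\ (forall x y, x < y -> f x < f y) /\ (forall x, f (x + 1) = f x + 1).

Definition involution (f : R -> R) : Prop :=
  (forall x, same_pt (f (f x)) x) /\ (exists x, ~ same_pt (f x) x).

Definition period_three (f : R -> R) : Prop :=
  (forall x, same_pt (f (f (f x))) x) /\ (exists x, ~ same_pt (f x) x).

Definition periodize (S : set) : set := fun t => exists n : Z, S (t + IZR n).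

Definition arc (x y : R) : set := periodize (fun t => x <= t <= y).

Definition union_of_arcs (k : nat) (S : set) : Prop :=
  exists l r : nat -> R,
    (forall i, (i < k)%nat -> l i < r i < l i + 1) /\
    (forall i j, (i < k)%nat -> (j < k)%nat -> i <> j ->
        forall t, ~ (arc (l i) (r i) t /\ arc (l j) (r j) t)) /\
    (forall t, S t <-> exists i, (i < k)%nat /\ arc (l i) (r i) t).

Definition comp_R (Y : set) (x : R) : set :=
  fun y => forall t, Rmin x y <= t <= Rmax x y -> Y t.

Definition is_comp (Y : set) (C : set) : Prop :=
  exists x, Y x /\ C = periodize (comp_R Y x).

Definition compl (Y : set) : set := fun t => ~ Y t.
Definition image (f : R -> R) (S : set) : set := fun y => exists x, S x /\ y = f x.
Definition preim (f : R -> R) (S : set) : set := fun x => S (f x).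

Definition touches (I G : set) : Prop :=
  exists p, I p /\ forall e, 0 < e -> exists q, G q /\ Rabs (p - q) < e.

Section Markov.
Variables (a b : R -> R) (A B Bi : set).

Definition Xset : set := fun t => A t \/ B t \/ Bi t.
Definition gapX (G : set) : Prop := is_comp (compl Xset) G.

(* two distinct components of X are consecutive in circular order *)
Definition consecutive (I J : set) : Prop :=
  I <> J /\ exists G, gapX G /\ touches I G /\ touches J G.

Definition principal_gap (G : set) : Prop :=
  gapX G /\ exists I J, is_comp A I /\ (is_comp B J \/ is_comp Bi J) /\
                        touches I G /\ touches J G.

Definition complementary_gap (G : set) : Prop :=
  gapX G /\ exists I J, is_comp B I /\ is_comp Bi J /\ touches I G /\ touches J G.

Definition bstuff : set := fun t => B t \/ Bi t \/ exists G, complementary_gap G /\ G t.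
Definition b_block (K : set) : Prop := is_comp bstuff K.
Definition bb : set := fun t => exists K, b_block K /\ K t.

Definition pg_edge (J K : set) : Prop :=
  principal_gap J /\ principal_gap K /\
  (K = image a J \/ (principal_gap (image b J) /\ K = image b J)
                 \/ (principal_gap (preim b J) /\ K = preim b J)).

Definition markov_system : Prop :=
  homeo_lift a /\ homeo_lift b /\ involution a /\ period_three b /\
  (forall t, ~ (A t /\ B t)) /\ (forall t, ~ (A t /\ Bi t)) /\ (forall t, ~ (B t /\ Bi t)) /\
  (exists k, (1 <= k)%nat /\ union_of_arcs k A /\ union_of_arcs k B /\ union_of_arcs k Bi) /\
  (forall I J, is_comp A I -> is_comp A J -> ~ consecutive I J) /\
  (forall I J, is_comp B I -> is_comp B J -> ~ consecutive I J) /\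
  (forall I J, is_comp Bi I -> is_comp Bi J -> ~ consecutive I J) /\
  image a A = bb /\
  image b A = B /\ image b B = Bi /\
  (forall J, principal_gap J -> principal_gap (image a J)) /\
  (forall J, principal_gap J ->
     (principal_gap (image b J) <-> ~ principal_gap (preim b J))) /\
  (forall J K, principal_gap J -> principal_gap K -> clos_refl_sym_trans _ pg_edge J K).

Inductive in_G : (R -> R) -> Prop :=
| G_id : in_G (fun x => x)
| G_a : in_G a
| G_b : in_G b
| G_comp f g : in_G f -> in_G g -> in_G (fun x => f (g x))
| G_inv f g : in_G f -> (forall x, g (f x) = x) -> (forall x, f (g x) = x) -> in_G g.

Definition X_inf : set := fun x => forall f, in_G f -> Xset (f x).

End Markov.

(* Main.v *)
Require Import Defs.
From Stdlib Require Import Reals Relations Lra Lia ZArith Classical FunctionalExtensionality PropExtensionality ClassicalEpsilon.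
Open Scope R_scope.

Lemma seteq (S T : set) : (forall t, S t <-> T t) -> S = T.
Proof. intros H. apply functional_extensionality; intro t. apply propositional_extensionality. apply H. Qed.

Definition periodic (Y : set) := forall t n, Y (t + IZR n) <-> Y t.

Ltac dlra := first [lra | left; lra | right; lra].

Lemma comp_R_iff Y x y : comp_R Y x y <-> (forall t, (x <= t <= y \/ y <= t <= x) -> Y t).
Proof.
  unfold comp_R, Rmin, Rmax; split; intros H t Ht; apply H;
  destruct (Rle_dec x y); lra.
Qed.

Lemma periodize_periodic S : periodic (periodize S).
Proof.
  intros t n; unfold periodize; split; intros [m Hm].
  - exists (n + m)%Z. rewrite plus_IZR. replace (t + (IZR n + IZR m)) with (t + IZR n + IZR m) by ring. exact Hm.
  - exists (m - n)%Z. rewrite minus_IZR. replace (t + IZR n + (IZR m - IZR n)) with (t + IZR m) by ring. exact Hm.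
Qed.

Lemma comp_R_refl Y x : Y x -> comp_R Y x x.
Proof. intros H. apply comp_R_iff. intros t Ht. replace t with x by lra. exact H. Qed.

Lemma comp_R_Y Y x y : comp_R Y x y -> Y x /\ Y y.
Proof. rewrite comp_R_iff. intros H; split; apply H; dlra. Qed.

Lemma comp_R_sym Y x y : comp_R Y x y -> comp_R Y y x.
Proof. rewrite !comp_R_iff. intros H t Ht. apply H; destruct Ht; dlra. Qed.

Lemma comp_R_trans Y x y z : comp_R Y x y -> comp_R Y y z -> comp_R Y x z.
Proof.
  rewrite !comp_R_iff. intros H1 H2 t Ht.
  destruct Ht; destruct (Rle_dec t y); first [apply H1; dlra | apply H2; dlra].
Qed.

Lemma comp_R_mono (Y Z : set) x y : (forall t, Y t -> Z t) -> comp_R Y x y -> comp_R Z x y.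
Proof. rewrite !comp_R_iff. intros HYZ H t Ht. apply HYZ, H, Ht. Qed.

Lemma comp_R_shift Y x y n : periodic Y -> comp_R Y (x + IZR n) y <-> comp_R Y x (y - IZR n).
Proof.
  intros HP. rewrite !comp_R_iff. split; intros H t Ht.
  - rewrite <- (HP t n). apply H. destruct Ht; dlra.
  - replace t with ((t - IZR n) + IZR n) by ring. apply (HP (t - IZR n) n). apply H. destruct Ht; dlra.
Qed.

Definition C (Y : set) (x : R) : set := periodize (comp_R Y x).

Lemma C_L1 Y x y : comp_R Y x y -> C Y y = C Y x.
Proof.
  intros H. apply seteq. intros t. unfold C, periodize. split; intros [n Hn]; exists n.
  - eapply comp_R_trans; eauto.
  - eapply comp_R_trans; [apply comp_R_sym|]; eauto.
Qed.

Lemma C_L2 Y x n : periodic Y -> C Y (x + IZR n) = C Y x.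
Proof.
  intros HP. apply seteq. intros t. unfold C, periodize. split; intros [m Hm].
  - rewrite comp_R_shift in Hm by auto. exists (m - n)%Z. rewrite minus_IZR.
    replace (t + (IZR m - IZR n)) with (t + IZR m - IZR n) by ring. exact Hm.
  - exists (m + n)%Z. rewrite comp_R_shift by auto. rewrite plus_IZR.
    replace (t + (IZR m + IZR n) - IZR n) with (t + IZR m) by ring. exact Hm.
Qed.

Lemma C_mem Y x y : periodic Y -> C Y x y -> C Y y = C Y x.
Proof.
  intros HP [n Hn]. rewrite <- (C_L2 Y y n HP). apply C_L1. exact Hn.
Qed.

Definition incr (f : R -> R) := forall x y, x < y -> f x < f y.
Definition good (f : R -> R) := incr f /\ (forall x, f (x + 1) = f x + 1) /\
   exists g, (forall x, g (f x) = x) /\ (forall x, f (g x) = x).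

Lemma incr_le f x y : incr f -> x <= y -> f x <= f y.
Proof. intros Hf H. destruct (Req_dec x y). subst; lra. left; apply Hf; lra. Qed.

Lemma incr_refl f x y : incr f -> f x <= f y -> x <= y.
Proof. intros Hf H. destruct (Rle_dec x y); auto. exfalso. assert (f y < f x) by (apply Hf; lra). lra. Qed.

Lemma incr_reflt f x y : incr f -> f x < f y -> x < y.
Proof. intros Hf H. destruct (Rlt_dec x y); auto. exfalso. assert (f y <= f x) by (apply incr_le; auto; lra). lra. Qed.

Lemma shiftZ f : (forall x, f (x + 1) = f x + 1) -> forall n x, f (x + IZR n) = f x + IZR n.
Proof.
  intros H1.
  assert (Hn : forall m x, f (x + INR m) = f x + INR m).
  { induction m; intros x. simpl. rewrite !Rplus_0_r. reflexivity.
    rewrite S_INR. replace (x + (INR m + 1)) with ((x + INR m) + 1) by ring.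
    rewrite H1, IHm. ring. }
  intros n x. assert (exists m, n = Z.of_nat m \/ n = (- Z.of_nat m)%Z) as [m [-> | ->]].
  { exists (Z.abs_nat n). lia. }
  - rewrite <- INR_IZR_INZ. apply Hn.
  - rewrite opp_IZR, <- INR_IZR_INZ. specialize (Hn m (x - INR m)).
    replace (x - INR m + INR m) with x in Hn by ring.
    replace (x + - INR m) with (x - INR m) by ring. lra.
Qed.

Lemma image_C Y f : good f -> periodic Y -> (forall t, Y (f t) <-> Y t) ->
  forall x, image f (C Y x) = C Y (f x).
Proof.
  intros [Hinc [H1 [g [Hgf Hfg]]]] HP HY x. pose proof (shiftZ f H1) as Hs.
  apply seteq. intros y. split.
  - intros [z [[n Hz] ->]]. exists n. rewrite <- Hs. rewrite comp_R_iff in *.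
    intros t Ht. rewrite <- (Hfg t). rewrite HY. apply Hz.
    rewrite <- (Hfg t) in Ht.
    destruct Ht as [[Ha Hb]|[Ha Hb]]; [left|right]; split; eapply incr_refl; eauto.
  - intros [n Hn]. exists (g (y + IZR n) + IZR (- n)). split.
    + exists n. rewrite opp_IZR. replace (g (y + IZR n) + - IZR n + IZR n) with (g (y + IZR n)) by ring.
      rewrite comp_R_iff in *. intros t Ht. rewrite <- HY. apply Hn.
      rewrite <- (Hfg (y + IZR n)).
      destruct Ht as [[Ha Hb]|[Ha Hb]]; [left|right]; split; apply incr_le; auto.
    + rewrite Hs, Hfg, opp_IZR. ring.
Qed.
Definition closedS (X : set) := forall h, ~ X h -> exists e, 0 < e /\ forall t, Rabs (t - h) < e -> ~ X t.

Lemma arc_closed l r : closedS (arc l r).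
Proof.
  intros h Hh. set (n := (up (h - l) - 1)%Z). destruct (archimed (h - l)) as [H1 H2].
  assert (Hn1 : l + IZR n <= h) by (unfold n; rewrite minus_IZR; simpl; lra).
  assert (Hn2 : h < l + IZR n + 1) by (unfold n; rewrite minus_IZR; simpl; lra).
  assert (Hr : r + IZR n < h).
  { destruct (Rlt_dec (r + IZR n) h); auto. exfalso; apply Hh. exists (-n)%Z. rewrite opp_IZR. lra. }
  exists (Rmin (h - (r + IZR n)) (l + IZR n + 1 - h)). split. apply Rmin_glb_lt; lra.
  intros t Ht [m Hm]. apply Rabs_def2 in Ht.
  pose proof (Rmin_l (h - (r + IZR n)) (l + IZR n + 1 - h)).
  pose proof (Rmin_r (h - (r + IZR n)) (l + IZR n + 1 - h)).
  destruct (Z.le_gt_cases (-m) n) as [Hm'|Hm'].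
  - apply IZR_le in Hm'. rewrite opp_IZR in Hm'. lra.
  - assert (Hm2 : (n + 1 <= - m)%Z) by lia. apply IZR_le in Hm2. rewrite plus_IZR, opp_IZR in Hm2. simpl in Hm2. lra.
Qed.

Lemma arcs_closed k (l r : nat -> R) : closedS (fun t => exists i, (i < k)%nat /\ arc (l i) (r i) t).
Proof.
  intros h Hh.
  assert (forall m, (m <= k)%nat -> exists e, 0 < e /\ forall i, (i < m)%nat -> forall t, Rabs (t - h) < e -> ~ arc (l i) (r i) t).
  { induction m; intros Hm.
    - exists 1. split. lra. intros i Hi. lia.
    - destruct IHm as [e1 [He1 H1]]. lia.
      destruct (arc_closed (l m) (r m) h) as [e2 [He2 H2]].
      { intros Ha. apply Hh. exists m. split; auto. }
      exists (Rmin e1 e2). split. apply Rmin_glb_lt; auto.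
      intros i Hi t Ht. pose proof (Rmin_l e1 e2). pose proof (Rmin_r e1 e2).
      destruct (Nat.eq_dec i m) as [->|Hne].
      + apply H2. lra.
      + apply H1. lia. lra. }
  destruct (H k (le_n k)) as [e [He H']]. exists e. split; auto.
  intros t Ht [i [Hi Ha]]. eapply H'; eauto.
Qed.

Lemma union_closed k S : union_of_arcs k S -> closedS S.
Proof.
  intros [l [r [_ [_ H]]]] h Hh.
  destruct (arcs_closed k l r h) as [e [He H']].
  { intros Hx. apply Hh, H, Hx. }
  exists e. split; auto. intros t Ht Hs. apply (H' t Ht), H, Hs.
Qed.

Lemma union_periodic k S : union_of_arcs k S -> periodic S.
Proof.
  intros [l [r [_ [_ H]]]] t n. rewrite !H. split; intros [i [Hi Ha]]; exists i; split; auto;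
  eapply (periodize_periodic _ t n); eauto.
Qed.

Lemma closed_or S T : closedS S -> closedS T -> closedS (fun t => S t \/ T t).
Proof.
  intros H1 H2 h Hh.
  destruct (H1 h) as [e1 [He1 G1]]. tauto. destruct (H2 h) as [e2 [He2 G2]]. tauto.
  exists (Rmin e1 e2). split. apply Rmin_glb_lt; auto.
  intros t Ht. pose proof (Rmin_l e1 e2). pose proof (Rmin_r e1 e2).
  intros [Hs|Hs]; [apply (G1 t)|apply (G2 t)]; auto; lra.
Qed.

Lemma right_end X : closedS X -> periodic X -> (exists x, X x) -> forall p, ~ X p ->
  exists hi, p < hi /\ X hi /\ forall t, p <= t < hi -> ~ X t.
Proof.
  intros Hc Hp [x0 Hx0] p Hnp.
  set (E := fun s => p <= s /\ forall t, p <= t <= s -> ~ X t).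
  set (M := x0 + IZR (up (p - x0))).
  assert (HM : X M /\ p < M). { split. apply Hp; auto. destruct (archimed (p - x0)); unfold M; lra. }
  assert (Hb : bound E).
  { exists M. intros s [Hs1 Hs2]. destruct (Rle_dec s M); auto. exfalso. apply (Hs2 M); [lra | tauto]. }
  assert (He : exists s, E s) by (exists p; split; [lra| intros t Ht; replace t with p by lra; auto]).
  destruct (completeness E Hb He) as [hi [Hub Hlub]].
  assert (Hfree : forall t, p <= t < hi -> ~ X t).
  { intros t Ht. destruct (classic (exists s, E s /\ t <= s)) as [[s [[Hs1 Hs2] Hts]]|Hn].
    - apply Hs2; lra.
    - exfalso. assert (hi <= t). apply Hlub. intros s Hs. destruct (Rle_dec s t); auto.
      exfalso; apply Hn; exists s; split; auto; lra. lra. }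
  destruct (Hc p Hnp) as [e [He0 He1]].
  assert (Hphi : p + e/2 <= hi).
  { apply Hub. split. lra. intros t Ht. apply He1. apply Rabs_def1; lra. }
  exists hi. split. lra. split; auto.
  destruct (classic (X hi)) as [|Hnh]; auto. exfalso.
  destruct (Hc hi Hnh) as [e' [He'0 He'1]].
  assert (hi + e'/2 <= hi).
  { apply Hub. split. lra. intros t Ht. destruct (Rlt_dec t hi). apply Hfree; lra. apply He'1. apply Rabs_def1; lra. }
  lra.
Qed.

Lemma gap_lemma X : closedS X -> periodic X -> (exists x, X x) -> forall p, ~ X p ->
  exists lo hi, lo < p < hi /\ X lo /\ X hi /\ forall t, lo < t < hi -> ~ X t.
Proof.
  intros Hc Hp [x0 Hx0] p Hnp.
  destruct (right_end X Hc Hp (ex_intro _ x0 Hx0) p Hnp) as [hi [H1 [H2 H3]]].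
  destruct (right_end (fun t => X (- t))) with (p := - p) as [hi' [G1 [G2 G3]]].
  - intros h Hh. destruct (Hc (-h) Hh) as [e [He He']]. exists e. split; auto.
    intros t Ht. apply He'. replace (- t - - h) with (- (t - h)) by ring. rewrite Rabs_Ropp. auto.
  - intros t n. replace (- (t + IZR n)) with (- t + IZR (- n)) by (rewrite opp_IZR; ring). apply Hp.
  - exists (- x0). rewrite Ropp_involutive. auto.
  - rewrite Ropp_involutive. auto.
  - exists (- hi'), hi. split. lra. split. auto. split. auto.
    intros t Ht. destruct (Rle_dec t p).
    + specialize (G3 (- t)). rewrite Ropp_involutive in G3. apply G3. lra.
    + apply H3. lra.
Qed.
Lemma homeo_surj f : homeo_lift f -> forall y, exists x, f x = y.
Proof.
  intros [Hc [Hi H1]] y. pose proof (shiftZ f H1) as Hs.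
  set (m := up (Rabs (y - f 0))). destruct (archimed (Rabs (y - f 0))) as [Hm _]. fold m in Hm.
  pose proof (Rabs_pos (y - f 0)). pose proof (Rle_abs (y - f 0)).
  assert (E1 : f (IZR m) = f 0 + IZR m) by (rewrite <- Hs; f_equal; ring).
  assert (E2 : f (- IZR m) = f 0 - IZR m) by (replace (- IZR m) with (0 + IZR (- m)) by (rewrite opp_IZR; ring); rewrite Hs, opp_IZR; ring).
  assert (Hc' : continuity (fun x => f x - y)).
  { apply (continuity_minus f (fun _ => y)); auto. apply continuity_const. intros u v; reflexivity. }
  destruct (IVT_cor (fun x => f x - y) (- IZR m) (IZR m) Hc') as [z [_ Hz]].
  - lra.
  - rewrite E1, E2. assert (Rabs (y - f 0) >= - (y - f 0)) by (rewrite <- Rabs_Ropp; apply Rle_ge, Rle_abs).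
    assert (f 0 - IZR m - y <= 0) by lra. assert (0 <= f 0 + IZR m - y) by lra. nra.
  - exists z. lra.
Qed.

Lemma homeo_good f : homeo_lift f -> good f.
Proof.
  intros Hf. pose proof (homeo_surj f Hf) as Hs. destruct Hf as [Hc [Hi H1]].
  split; [exact Hi|]. split; [exact H1|].
  exists (fun y => proj1_sig (constructive_indefinite_description _ (Hs y))).
  assert (Hfg : forall y, f (proj1_sig (constructive_indefinite_description _ (Hs y))) = y).
  { intros y. destruct (constructive_indefinite_description _ (Hs y)); auto. }
  split; auto. intros x. specialize (Hfg (f x)).
  set (z := proj1_sig _) in *. apply Rle_antisym; apply (incr_refl f); auto; lra.
Qed.

Lemma inG_good a b f : homeo_lift a -> homeo_lift b -> in_G a b f -> good f.
Proof.
  intros Ha Hb H. induction H.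
  - split. intros x y; auto. split. auto. exists (fun x => x). auto.
  - apply homeo_good; auto.
  - apply homeo_good; auto.
  - destruct IHin_G1 as [Fi [F1 [f' [F2 F3]]]]. destruct IHin_G2 as [Gi [G1 [g' [G2 G3]]]].
    split. intros x y Hxy; auto. split. intros x; rewrite G1, F1; auto.
    exists (fun x => g' (f' x)). split; intros x. rewrite F2; auto. rewrite G3; auto.
  - destruct IHin_G as [Fi [F1 _]]. split.
    + intros x y Hxy. apply (incr_reflt f); auto. rewrite !H1; auto.
    + split. intros x. rewrite <- (H0 (g x + 1)). rewrite F1, H1. reflexivity.
      exists f. split; auto.
Qed.

Lemma inG_inv a b h : homeo_lift a -> homeo_lift b -> in_G a b h ->
  exists g, in_G a b g /\ (forall x, g (h x) = x) /\ (forall x, h (g x) = x).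
Proof.
  intros Ha Hb H. destruct (inG_good a b h Ha Hb H) as [_ [_ [g [G1 G2]]]].
  exists g. split; auto. eapply G_inv; eauto.
Qed.

Lemma Xinf_inv a b A B Bi h : homeo_lift a -> homeo_lift b -> in_G a b h ->
  forall t, X_inf a b A B Bi (h t) <-> X_inf a b A B Bi t.
Proof.
  intros Ha Hb H t. destruct (inG_inv a b h Ha Hb H) as [g [Hg [G1 G2]]]. split.
  - intros HX f Hf. specialize (HX (fun x => f (g x)) (G_comp _ _ _ _ Hf Hg)). simpl in HX. rewrite G1 in HX. exact HX.
  - intros HX f Hf. exact (HX (fun x => f (h x)) (G_comp _ _ _ _ Hf H)).
Qed.

Lemma Xinf_periodic a b A B Bi : homeo_lift a -> homeo_lift b -> periodic (Xset A B Bi) ->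
  periodic (X_inf a b A B Bi).
Proof.
  intros Ha Hb HP t n. split.
  - intros HX f Hf. destruct (inG_good a b f Ha Hb Hf) as [_ [F1 _]].
    specialize (HX f Hf). rewrite (shiftZ f F1) in HX. apply (HP (f t) n). exact HX.
  - intros HX f Hf. destruct (inG_good a b f Ha Hb Hf) as [_ [F1 _]].
    rewrite (shiftZ f F1). apply HP. apply HX, Hf.
Qed.

Lemma compl_periodic Y : periodic Y -> periodic (compl Y).
Proof. intros HP t n. unfold compl. rewrite (HP t n). tauto. Qed.

Definition Rel a b A B Bi (p q : R) : Prop :=
  exists h, in_G a b h /\ C (compl (X_inf a b A B Bi)) (h p) = C (compl (X_inf a b A B Bi)) q.

Lemma image_C_G a b A B Bi h : homeo_lift a -> homeo_lift b -> periodic (Xset A B Bi) -> in_G a b h ->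
  forall x, image h (C (compl (X_inf a b A B Bi)) x) = C (compl (X_inf a b A B Bi)) (h x).
Proof.
  intros Ha Hb HP Hh x. apply image_C. exact (inG_good a b h Ha Hb Hh).
  apply compl_periodic, Xinf_periodic; auto.
  intros t. unfold compl. rewrite (Xinf_inv a b A B Bi h Ha Hb Hh t). tauto.
Qed.

Lemma image_comp (f g : R -> R) S : image (fun x => f (g x)) S = image f (image g S).
Proof.
  apply seteq. intros y. split.
  - intros [x [Hx ->]]. exists (g x). split; auto. exists x; auto.
  - intros [z [[x [Hx ->]] ->]]. exists x; auto.
Qed.

Lemma Rel_refl a b A B Bi p : Rel a b A B Bi p p.
Proof. exists (fun x => x). split. constructor. reflexivity. Qed.

Lemma Rel_trans a b A B Bi p q r : homeo_lift a -> homeo_lift b -> periodic (Xset A B Bi) ->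
  Rel a b A B Bi p q -> Rel a b A B Bi q r -> Rel a b A B Bi p r.
Proof.
  intros Ha Hb HP [h1 [H1 E1]] [h2 [H2 E2]]. exists (fun x => h2 (h1 x)). split.
  apply G_comp; auto.
  rewrite <- (image_C_G a b A B Bi h2 Ha Hb HP H2), E1, (image_C_G a b A B Bi h2 Ha Hb HP H2). exact E2.
Qed.

Lemma Rel_sym a b A B Bi p q : homeo_lift a -> homeo_lift b -> periodic (Xset A B Bi) ->
  Rel a b A B Bi p q -> Rel a b A B Bi q p.
Proof.
  intros Ha Hb HP [h [H E]]. destruct (inG_inv a b h Ha Hb H) as [g [Hg [G1 G2]]].
  exists g. split; auto.
  rewrite <- (image_C_G a b A B Bi g Ha Hb HP Hg), <- E, (image_C_G a b A B Bi g Ha Hb HP Hg), G1. reflexivity.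
Qed.

Lemma Rel_C a b A B Bi p q : C (compl (X_inf a b A B Bi)) p = C (compl (X_inf a b A B Bi)) q -> Rel a b A B Bi p q.
Proof. intros E. exists (fun x => x). split. constructor. exact E. Qed.

Lemma Rel_h a b A B Bi h p : in_G a b h -> Rel a b A B Bi p (h p).
Proof. intros H. exists h. split; auto. Qed.
Lemma free_comp (X : set) lo hi s y : lo < s < hi -> (forall t, lo < t < hi -> ~ X t) ->
  lo < y < hi -> comp_R (compl X) s y.
Proof. intros Hs Hf Hy. apply comp_R_iff. intros t Ht. apply Hf. destruct Ht; lra. Qed.

Lemma touches_pt (X I : set) lo hi s p0 : lo < s < hi -> (forall t, lo < t < hi -> ~ X t) ->
  (p0 = lo \/ p0 = hi) -> I p0 -> touches I (periodize (comp_R (compl X) s)).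
Proof.
  intros Hs Hf Hp HI. exists p0. split; auto. intros e He.
  set (d := Rmin e (hi - lo)). assert (0 < d) by (apply Rmin_glb_lt; lra).
  assert (d <= e) by apply Rmin_l. assert (d <= hi - lo) by apply Rmin_r.
  destruct Hp as [->| ->].
  - exists (lo + d/2). split.
    + exists 0%Z. simpl IZR. rewrite Rplus_0_r. apply (free_comp X lo hi); auto; lra.
    + apply Rabs_def1; lra.
  - exists (hi - d/2). split.
    + exists 0%Z. simpl IZR. rewrite Rplus_0_r. apply (free_comp X lo hi); auto; lra.
    + apply Rabs_def1; lra.
Qed.

Definition geo (A B Bi : set) :=
  closedS A /\ closedS B /\ closedS Bi /\ periodic A /\ periodic B /\ periodic Bi /\
  (exists x, A x) /\ (exists x, B x) /\ (exists x, Bi x) /\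
  (forall t, ~ (A t /\ B t)) /\ (forall t, ~ (A t /\ Bi t)) /\ (forall t, ~ (B t /\ Bi t)).

Lemma geo_X A B Bi : geo A B Bi ->
  closedS (Xset A B Bi) /\ periodic (Xset A B Bi) /\ exists x, Xset A B Bi x.
Proof.
  intros [cA [cB [cBi [pA [pB [pBi [[x Hx] _]]]]]]]. split; [|split].
  - apply closed_or; auto. apply closed_or; auto.
  - intros t n. unfold Xset. rewrite (pA t n), (pB t n), (pBi t n). tauto.
  - exists x. left; auto.
Qed.

Lemma principal_of A B Bi lo hi s : lo < s < hi -> (forall t, lo < t < hi -> ~ Xset A B Bi t) ->
  ~ Xset A B Bi s ->
  (A lo /\ (B hi \/ Bi hi)) \/ ((B lo \/ Bi lo) /\ A hi) ->
  principal_gap A B Bi (periodize (comp_R (compl (Xset A B Bi)) s)).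
Proof.
  intros Hs Hf Hns H. split. exists s. split; auto.
  destruct H as [[HA HB]|[HB HA]].
  - exists (periodize (comp_R A lo)), (periodize (comp_R (if excluded_middle_informative (B hi) then B else Bi) hi)).
    split. exists lo. split; auto.
    destruct (excluded_middle_informative (B hi)) as [Hb|Hb].
    + split. left. exists hi; split; auto. split.
      apply (touches_pt _ _ lo hi s lo); auto. exists 0%Z. simpl IZR. rewrite Rplus_0_r. apply comp_R_refl; auto.
      apply (touches_pt _ _ lo hi s hi); auto. exists 0%Z. simpl IZR. rewrite Rplus_0_r. apply comp_R_refl; auto.
    + assert (Bi hi) by tauto. split. right. exists hi; split; auto. split.
      apply (touches_pt _ _ lo hi s lo); auto. exists 0%Z. simpl IZR. rewrite Rplus_0_r. apply comp_R_refl; auto.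
      apply (touches_pt _ _ lo hi s hi); auto. exists 0%Z. simpl IZR. rewrite Rplus_0_r. apply comp_R_refl; auto.
  - exists (periodize (comp_R A hi)), (periodize (comp_R (if excluded_middle_informative (B lo) then B else Bi) lo)).
    split. exists hi. split; auto.
    destruct (excluded_middle_informative (B lo)) as [Hb|Hb].
    + split. left. exists lo; split; auto. split.
      apply (touches_pt _ _ lo hi s hi); auto. exists 0%Z. simpl IZR. rewrite Rplus_0_r. apply comp_R_refl; auto.
      apply (touches_pt _ _ lo hi s lo); auto. exists 0%Z. simpl IZR. rewrite Rplus_0_r. apply comp_R_refl; auto.
    + assert (Bi lo) by tauto. split. right. exists lo; split; auto. split.
      apply (touches_pt _ _ lo hi s hi); auto. exists 0%Z. simpl IZR. rewrite Rplus_0_r. apply comp_R_refl; auto.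
      apply (touches_pt _ _ lo hi s lo); auto. exists 0%Z. simpl IZR. rewrite Rplus_0_r. apply comp_R_refl; auto.
Qed.
Lemma not_same (S T X : set) lo hi p :
  (forall t, S t -> X t) -> (forall t, T t -> X t) -> (forall t, ~ (S t /\ T t)) ->
  periodic T -> (exists x, T x) -> periodic X ->
  lo < p < hi -> (forall t, lo < t < hi -> ~ X t) -> X lo -> S lo -> S hi ->
  periodize (comp_R S lo) <> periodize (comp_R S hi).
Proof.
  intros HSX HTX Hdis HPT [tau Htau] HPX Hp Hf HXlo HSlo HShi Heq.
  assert (HX1 : X (lo + 1)). { apply (HPX lo 1%Z). exact HXlo. }
  assert (Hlo1 : p < lo + 1).
  { destruct (Rlt_dec p (lo + 1)); auto. exfalso. apply (Hf (lo + 1)); auto; lra. }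
  assert (Hhi : hi <= lo + 1).
  { destruct (Rle_dec hi (lo + 1)); auto. exfalso. apply (Hf (lo + 1)); auto; lra. }
  assert (H : periodize (comp_R S hi) lo).
  { rewrite <- Heq. exists 0%Z. simpl IZR. rewrite Rplus_0_r. apply comp_R_refl; auto. }
  destruct H as [n Hn]. rewrite comp_R_iff in Hn.
  destruct (Z.le_gt_cases n 0) as [H0|H0]; [|destruct (Z.le_gt_cases n 1) as [H1|H1]].
  - apply IZR_le in H0. apply (Hf p). lra. apply HSX, Hn. right. lra.
  - assert (n = 1%Z) by lia. subst n. simpl IZR in Hn.
    destruct (archimed (hi - tau)) as [Ha1 Ha2].
    set (tau' := tau + IZR (up (hi - tau))).
    assert (HT' : T tau') by (apply HPT; auto).
    destruct (Rle_dec tau' (lo + 1)).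
    + apply (Hdis tau'). split; auto. apply Hn. left. unfold tau' in *; lra.
    + assert (HT2 : T (tau' + IZR (-1))) by (apply HPT; auto). simpl IZR in HT2.
      destruct (Rlt_dec (tau' + -1) hi).
      * apply (Hf (tau' + -1)). unfold tau' in *; lra. auto.
      * apply (Hdis hi). split; auto. replace hi with (tau' + -1) by (unfold tau' in *; lra). auto.
  - assert (H2 : (2 <= n)%Z) by lia. apply IZR_le in H2. simpl IZR in H2.
    apply (Hf p). lra. apply (HPX p 1%Z). apply HSX, Hn. left. simpl IZR. lra.
Qed.

Lemma same_type_false A B Bi (S T : set) lo hi p :
  (forall t, S t -> Xset A B Bi t) -> (forall t, T t -> Xset A B Bi t) -> (forall t, ~ (S t /\ T t)) ->
  periodic T -> (exists x, T x) -> periodic (Xset A B Bi) ->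
  (forall I J, is_comp S I -> is_comp S J -> ~ consecutive A B Bi I J) ->
  lo < p < hi -> (forall t, lo < t < hi -> ~ Xset A B Bi t) -> ~ Xset A B Bi p -> S lo -> S hi -> False.
Proof.
  intros HSX HTX Hdis HPT HT HPX HB Hp Hf Hnp HSlo HShi.
  apply (HB (periodize (comp_R S lo)) (periodize (comp_R S hi))).
  - exists lo; auto.
  - exists hi; auto.
  - split. apply (not_same S T (Xset A B Bi) lo hi p); auto.
    exists (periodize (comp_R (compl (Xset A B Bi)) p)). split. exists p; auto. split.
    + apply (touches_pt _ _ lo hi p lo); auto. exists 0%Z. simpl IZR. rewrite Rplus_0_r. apply comp_R_refl; auto.
    + apply (touches_pt _ _ lo hi p hi); auto. exists 0%Z. simpl IZR. rewrite Rplus_0_r. apply comp_R_refl; auto.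
Qed.

Lemma comp_case1 A B Bi b lo hi p : good b -> geo A B Bi -> image b A = B -> image b B = Bi ->
  lo < p < hi -> (forall t, lo < t < hi -> ~ Xset A B Bi t) -> B lo -> Bi hi ->
  exists s, ~ Xset A B Bi s /\ principal_gap A B Bi (periodize (comp_R (compl (Xset A B Bi)) s)) /\
    lo < b s < hi.
Proof.
  intros [Hi [_ [g [Hgb Hbg]]]] Hgeo HD1 HD2 Hp Hf Hlo Hhi.
  pose proof (geo_X A B Bi Hgeo) as [HcX [HPX HneX]].
  destruct Hgeo as [cA [cB [cBi [pA [pB [pBi [_ [_ [_ [dAB [dABi dBBi]]]]]]]]]]].
  set (q := g lo). set (u := g hi).
  assert (Eq : b q = lo) by apply Hbg. assert (Eu : b u = hi) by apply Hbg.
  assert (Aq : A q). { rewrite <- HD1 in Hlo. destruct Hlo as [x [Hx Hx']]. unfold q. rewrite Hx', Hgb. auto. }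
  assert (Bu : B u). { rewrite <- HD2 in Hhi. destruct Hhi as [x [Hx Hx']]. unfold u. rewrite Hx', Hgb. auto. }
  assert (Hqu : q < u) by (apply (incr_reflt b); auto; lra).
  assert (Hreg : forall t, q < t < u -> ~ A t /\ ~ B t).
  { intros t Ht. assert (Hbt : lo < b t < hi) by (rewrite <- Eq, <- Eu; split; apply Hi; lra).
    split; intros H.
    - apply (Hf (b t)); auto. right; left. rewrite <- HD1. exists t; auto.
    - apply (Hf (b t)); auto. right; right. rewrite <- HD2. exists t; auto. }
  destruct (cBi q) as [e [He He']]. { intros H. apply (dABi q); auto. }
  set (d := Rmin e (u - q)). assert (Hd0 : 0 < d) by (apply Rmin_glb_lt; lra).
  assert (Hde : d <= e) by apply Rmin_l. assert (Hdu : d <= u - q) by apply Rmin_r.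
  set (s := q + d / 2).
  assert (Hfree : forall t, q < t <= s -> ~ Xset A B Bi t).
  { intros t Ht [H|[H|H]].
    - apply (proj1 (Hreg t ltac:(unfold s in *; lra))); auto.
    - apply (proj2 (Hreg t ltac:(unfold s in *; lra))); auto.
    - apply (He' t); auto. apply Rabs_def1; unfold s in *; lra. }
  assert (Hns : ~ Xset A B Bi s) by (apply Hfree; unfold s; lra).
  destruct (gap_lemma _ HcX HPX HneX s Hns) as [lo' [hi' [Hs' [Xlo' [Xhi' Hf']]]]].
  assert (Elo : lo' = q).
  { destruct (Rtotal_order lo' q) as [H|[H|H]]; auto; exfalso.
    - apply (Hf' q). unfold s in *; lra. left; auto.
    - apply (Hfree lo'); auto; lra. }
  subst lo'.
  assert (Hhu : hi' <= u).
  { destruct (Rle_dec hi' u); auto. exfalso. apply (Hf' u). unfold s in *; lra. right; left; auto. }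
  exists s. split; auto. split.
  - apply (principal_of A B Bi q hi' s); auto. left. split; auto.
    destruct Xhi' as [H|H]; auto. exfalso. destruct (Rlt_dec hi' u).
    + apply (proj1 (Hreg hi' ltac:(unfold s in *; lra))); auto.
    + apply (dAB u). split; auto. replace u with hi' by lra; auto.
  - rewrite <- Eq, <- Eu. split; apply Hi; unfold s in *; lra.
Qed.

Lemma comp_case2 A B Bi b lo hi p : good b -> geo A B Bi -> image b A = B -> image b B = Bi ->
  lo < p < hi -> (forall t, lo < t < hi -> ~ Xset A B Bi t) -> Bi lo -> B hi ->
  exists s, ~ Xset A B Bi s /\ principal_gap A B Bi (periodize (comp_R (compl (Xset A B Bi)) s)) /\
    lo < b s < hi.
Proof.
  intros [Hi [_ [g [Hgb Hbg]]]] Hgeo HD1 HD2 Hp Hf Hlo Hhi.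
  pose proof (geo_X A B Bi Hgeo) as [HcX [HPX HneX]].
  destruct Hgeo as [cA [cB [cBi [pA [pB [pBi [_ [_ [_ [dAB [dABi dBBi]]]]]]]]]]].
  set (q := g hi). set (u := g lo).
  assert (Eq : b q = hi) by apply Hbg. assert (Eu : b u = lo) by apply Hbg.
  assert (Aq : A q). { rewrite <- HD1 in Hhi. destruct Hhi as [x [Hx Hx']]. unfold q. rewrite Hx', Hgb. auto. }
  assert (Bu : B u). { rewrite <- HD2 in Hlo. destruct Hlo as [x [Hx Hx']]. unfold u. rewrite Hx', Hgb. auto. }
  assert (Hqu : u < q) by (apply (incr_reflt b); auto; lra).
  assert (Hreg : forall t, u < t < q -> ~ A t /\ ~ B t).
  { intros t Ht. assert (Hbt : lo < b t < hi) by (rewrite <- Eq, <- Eu; split; apply Hi; lra).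
    split; intros H.
    - apply (Hf (b t)); auto. right; left. rewrite <- HD1. exists t; auto.
    - apply (Hf (b t)); auto. right; right. rewrite <- HD2. exists t; auto. }
  destruct (cBi q) as [e [He He']]. { intros H. apply (dABi q); auto. }
  set (d := Rmin e (q - u)). assert (Hd0 : 0 < d) by (apply Rmin_glb_lt; lra).
  assert (Hde : d <= e) by apply Rmin_l. assert (Hdu : d <= q - u) by apply Rmin_r.
  set (s := q - d / 2).
  assert (Hfree : forall t, s <= t < q -> ~ Xset A B Bi t).
  { intros t Ht [H|[H|H]].
    - apply (proj1 (Hreg t ltac:(unfold s in *; lra))); auto.
    - apply (proj2 (Hreg t ltac:(unfold s in *; lra))); auto.
    - apply (He' t); auto. apply Rabs_def1; unfold s in *; lra. }
  assert (Hns : ~ Xset A B Bi s) by (apply Hfree; unfold s; lra).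
  destruct (gap_lemma _ HcX HPX HneX s Hns) as [lo' [hi' [Hs' [Xlo' [Xhi' Hf']]]]].
  assert (Ehi : hi' = q).
  { destruct (Rtotal_order hi' q) as [H|[H|H]]; auto; exfalso.
    - apply (Hfree hi'); auto; lra.
    - apply (Hf' q). unfold s in *; lra. left; auto. }
  subst hi'.
  assert (Hhu : u <= lo').
  { destruct (Rle_dec u lo'); auto. exfalso. apply (Hf' u). unfold s in *; lra. right; left; auto. }
  exists s. split; auto. split.
  - apply (principal_of A B Bi lo' q s); auto. right. split; auto.
    destruct Xlo' as [H|H]; auto. exfalso. destruct (Rlt_dec u lo').
    + apply (proj1 (Hreg lo' ltac:(unfold s in *; lra))); auto.
    + apply (dAB u). split; auto. replace u with lo' by lra; auto.
  - rewrite <- Eq, <- Eu. split; apply Hi; unfold s in *; lra.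
Qed.
Lemma classify A B Bi b : good b -> geo A B Bi -> image b A = B -> image b B = Bi ->
  (forall I J, is_comp A I -> is_comp A J -> ~ consecutive A B Bi I J) ->
  (forall I J, is_comp B I -> is_comp B J -> ~ consecutive A B Bi I J) ->
  (forall I J, is_comp Bi I -> is_comp Bi J -> ~ consecutive A B Bi I J) ->
  forall p, ~ Xset A B Bi p ->
  exists s, ~ Xset A B Bi s /\ principal_gap A B Bi (periodize (comp_R (compl (Xset A B Bi)) s)) /\
    (comp_R (compl (Xset A B Bi)) p s \/ comp_R (compl (Xset A B Bi)) p (b s)).
Proof.
  intros Hb Hgeo HD1 HD2 BA BB BBi p Hnp.
  pose proof (geo_X A B Bi Hgeo) as [HcX [HPX HneX]].
  pose proof Hgeo as [cA [cB [cBi [pA [pB [pBi [nA [nB [nBi [dAB [dABi dBBi]]]]]]]]]]].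
  destruct (gap_lemma _ HcX HPX HneX p Hnp) as [lo [hi [Hp [Xlo [Xhi Hf]]]]].
  assert (SA : forall t, A t -> Xset A B Bi t) by (intros t H; left; auto).
  assert (SB : forall t, B t -> Xset A B Bi t) by (intros t H; right; left; auto).
  assert (SBi : forall t, Bi t -> Xset A B Bi t) by (intros t H; right; right; auto).
  assert (Hprinc : (A lo /\ (B hi \/ Bi hi)) \/ ((B lo \/ Bi lo) /\ A hi) ->
     exists s, ~ Xset A B Bi s /\ principal_gap A B Bi (periodize (comp_R (compl (Xset A B Bi)) s)) /\
    (comp_R (compl (Xset A B Bi)) p s \/ comp_R (compl (Xset A B Bi)) p (b s))).
  { intros H. exists p. split; auto. split. apply (principal_of A B Bi lo hi p); auto.
    left. apply comp_R_refl. auto. }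
  destruct Xlo as [Hl|[Hl|Hl]]; destruct Xhi as [Hh|[Hh|Hh]].
  - exfalso. apply (same_type_false A B Bi A B lo hi p); auto.
  - apply Hprinc; tauto.
  - apply Hprinc; tauto.
  - apply Hprinc; tauto.
  - exfalso. apply (same_type_false A B Bi B A lo hi p); auto. intros t [H1 H2]. apply (dAB t); auto.
  - destruct (comp_case1 A B Bi b lo hi p) as [s [Hs1 [Hs2 Hs3]]]; auto.
    exists s. split; auto. split; auto. right. apply (free_comp _ lo hi); auto.
  - apply Hprinc; tauto.
  - destruct (comp_case2 A B Bi b lo hi p) as [s [Hs1 [Hs2 Hs3]]]; auto.
    exists s. split; auto. split; auto. right. apply (free_comp _ lo hi); auto.
  - exfalso. apply (same_type_false A B Bi Bi A lo hi p); auto. intros t [H1 H2]. apply (dABi t); auto.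
Qed.

Lemma Xinf_sub a b A B Bi t : X_inf a b A B Bi t -> Xset A B Bi t.
Proof. intros H. exact (H (fun x => x) (G_id a b)). Qed.

Lemma gapC a b A B Bi x r : homeo_lift a -> homeo_lift b -> periodic (Xset A B Bi) ->
  periodize (comp_R (compl (Xset A B Bi)) x) r ->
  C (compl (X_inf a b A B Bi)) r = C (compl (X_inf a b A B Bi)) x.
Proof.
  intros Ha Hb HP [n Hn].
  rewrite <- (C_L2 _ r n). apply C_L1. eapply comp_R_mono; [|exact Hn].
  intros t Ht H. apply Ht. apply (Xinf_sub a b); auto.
  apply compl_periodic, Xinf_periodic; auto.
Qed.

Lemma gap_Rel a b A B Bi x r r' : homeo_lift a -> homeo_lift b -> periodic (Xset A B Bi) ->
  periodize (comp_R (compl (Xset A B Bi)) x) r -> periodize (comp_R (compl (Xset A B Bi)) x) r' ->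
  Rel a b A B Bi r r'.
Proof.
  intros Ha Hb HP H1 H2. apply Rel_C. rewrite (gapC a b A B Bi x r), (gapC a b A B Bi x r'); auto.
Qed.

Lemma gapX_Rel a b A B Bi J r r' : homeo_lift a -> homeo_lift b -> periodic (Xset A B Bi) ->
  gapX A B Bi J -> J r -> J r' -> Rel a b A B Bi r r'.
Proof. intros Ha Hb HP [x [_ ->]] H1 H2. eapply gap_Rel; eauto. Qed.

Lemma gapX_ne A B Bi J : gapX A B Bi J -> exists r, J r.
Proof. intros [x [Hx ->]]. exists x. exists 0%Z. simpl IZR. rewrite Rplus_0_r. apply comp_R_refl; auto. Qed.

Lemma edge_Rel a b A B Bi J K r r' : homeo_lift a -> homeo_lift b -> periodic (Xset A B Bi) ->
  pg_edge a b A B Bi J K -> J r -> K r' -> Rel a b A B Bi r r'.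
Proof.
  intros Ha Hb HP [[GJ _] [[GK _] E]] Hr Hr'.
  destruct E as [E|[[_ E]|[_ E]]]; subst K.
  - destruct Hr' as [z [Hz ->]]. apply (Rel_trans a b A B Bi r z _ Ha Hb HP).
    exact (gapX_Rel a b A B Bi J r z Ha Hb HP GJ Hr Hz). apply Rel_h. constructor.
  - destruct Hr' as [z [Hz ->]]. apply (Rel_trans a b A B Bi r z _ Ha Hb HP).
    exact (gapX_Rel a b A B Bi J r z Ha Hb HP GJ Hr Hz). apply Rel_h. constructor.
  - unfold preim in Hr'. apply (Rel_trans a b A B Bi r (b r') _ Ha Hb HP).
    exact (gapX_Rel a b A B Bi J r (b r') Ha Hb HP GJ Hr Hr').
    destruct (homeo_good b Hb) as [_ [_ [g [G1 G2]]]].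
    assert (Hg : in_G a b g) by (apply (G_inv a b b g); auto; constructor).
    pose proof (Rel_h a b A B Bi g (b r') Hg) as H. rewrite G1 in H. exact H.
Qed.

Lemma conn_Rel a b A B Bi J K : homeo_lift a -> homeo_lift b -> periodic (Xset A B Bi) ->
  clos_refl_sym_trans_1n _ (pg_edge a b A B Bi) J K -> principal_gap A B Bi J ->
  forall r r', J r -> K r' -> Rel a b A B Bi r r'.
Proof.
  intros Ha Hb HP H. induction H as [J|J y K E H IH]; intros PJ r r' Hr Hr'.
  - destruct PJ as [GJ _]. eapply gapX_Rel; eauto.
  - assert (Py : principal_gap A B Bi y) by (destruct E as [[_ [P _]]|[P _]]; auto).
    destruct (gapX_ne A B Bi y (proj1 Py)) as [z Hz].
    apply (Rel_trans a b A B Bi r z); auto.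
    + destruct E as [E|E].
      * eapply edge_Rel; eauto.
      * apply Rel_sym; auto. eapply edge_Rel; eauto.
Qed.

Lemma union_ne k S : union_of_arcs k S -> (1 <= k)%nat -> exists x, S x.
Proof.
  intros [l [r [Hlr [_ H]]]] Hk. exists (l 0%nat). apply H. exists 0%nat. split. lia.
  exists 0%Z. simpl IZR. specialize (Hlr 0%nat ltac:(lia)). lra.
Qed.

Theorem lemma10p8 (a b : R -> R) (A B Bi : R -> Prop) :
  markov_system a b A B Bi ->
  forall U V : R -> Prop,
    is_comp (compl (X_inf a b A B Bi)) U ->
    is_comp (compl (X_inf a b A B Bi)) V ->
    exists f, in_G a b f /\ image f U = V.
Proof.
  intros HM U V HU HV.
  destruct HM as [Ha [Hb [_ [_ [dAB [dABi [dBBi [[k [Hk [uA [uB uBi]]]] [BA [BB [BBi [_ [HD1 [HD2 [_ [_ Hconn]]]]]]]]]]]]]]]].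
  assert (Hgeo : geo A B Bi).
  { split. eapply union_closed; eassumption. split. eapply union_closed; eassumption.
    split. eapply union_closed; eassumption. split. eapply union_periodic; eassumption.
    split. eapply union_periodic; eassumption. split. eapply union_periodic; eassumption.
    split. eapply union_ne; eassumption. split. eapply union_ne; eassumption.
    split. eapply union_ne; eassumption. auto. }
  pose proof (geo_X A B Bi Hgeo) as [HcX [HPX HneX]].
  pose proof (homeo_good b Hb) as Hgb.
  assert (Key : forall p, ~ Xset A B Bi p -> exists s, ~ Xset A B Bi s /\ principal_gap A B Bi (periodize (comp_R (compl (Xset A B Bi)) s)) /\
     Rel a b A B Bi p s).
  { intros p Hp. destruct (classify A B Bi b Hgb Hgeo HD1 HD2 BA BB BBi p Hp) as [s [Hs1 [Hs2 Hs3]]].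
    exists s. split; auto. split; auto. destruct Hs3 as [H|H].
    - apply Rel_C. symmetry. apply (C_L1 _ p s). eapply comp_R_mono; [|exact H].
      intros t Ht Hx. apply Ht. apply (Xinf_sub a b); auto.
    - apply (Rel_trans a b A B Bi p (b s)); auto.
      + apply Rel_C. symmetry. apply (C_L1 _ p (b s)). eapply comp_R_mono; [|exact H].
        intros t Ht Hx. apply Ht. apply (Xinf_sub a b); auto.
      + apply Rel_sym; auto. apply Rel_h. constructor. }
  assert (Key2 : forall x0, compl (X_inf a b A B Bi) x0 -> exists s, ~ Xset A B Bi s /\ principal_gap A B Bi (periodize (comp_R (compl (Xset A B Bi)) s)) /\
     Rel a b A B Bi x0 s).
  { intros x0 Hx0. unfold compl, X_inf in Hx0. apply not_all_ex_not in Hx0. destruct Hx0 as [f Hf].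
    apply imply_to_and in Hf. destruct Hf as [Hf1 Hf2].
    destruct (Key (f x0) Hf2) as [s [Ns [Ps Rs]]]. exists s. split; auto. split; auto.
    apply (Rel_trans a b A B Bi x0 (f x0)); auto. apply Rel_h; auto. }
  destruct HU as [x0 [Hx0 ->]]. destruct HV as [y0 [Hy0 ->]].
  destruct (Key2 x0 Hx0) as [s1 [N1 [P1 R1]]]. destruct (Key2 y0 Hy0) as [s2 [N2 [P2 R2]]].
  assert (R12 : Rel a b A B Bi s1 s2).
  { apply (conn_Rel a b A B Bi _ _ Ha Hb HPX (proj1 (clos_rst_rst1n_iff _ _ _ _) (Hconn _ _ P1 P2)) P1);
    exists 0%Z; simpl IZR; rewrite Rplus_0_r; apply comp_R_refl; auto. }
  assert (R : Rel a b A B Bi x0 y0).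
  { apply (Rel_trans a b A B Bi x0 s1); auto. apply (Rel_trans a b A B Bi s1 s2); auto. apply Rel_sym; auto. }
  destruct R as [h [Hh E]]. exists h. split; auto.
  change (image h (C (compl (X_inf a b A B Bi)) x0) = C (compl (X_inf a b A B Bi)) y0).
  rewrite (image_C_G a b A B Bi h Ha Hb HPX Hh). exact E.
Qed.
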